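(* Let $s,q,r\in\mathbb N$ and $c\in\mathbb R^s$. (a) If $K\in\mathbb R^{s\times s}$ is diagonal, then $V_q^{\mathsf T}KV_r$ has Hankel form. (b) If $X\in\mathbb R^{q\times r}$ has Hankel form, then $\mathcal P_q^{\mathsf T}X\mathcal P_r$ and $\mathcal L_{q,r}(X)$ have Hankel form. (c) For all $X\in\mathbb R^{q\times r}$: $\mathcal P_q^{\mathsf T}\mathcal L_{q,r}(X)=\mathcal L_{q,r}(\mathcal P_q^{\mathsf T}X)$ and $\mathcal L_{q,r}(X)\mathcal P_r=\mathcal L_{q,r}(X\mathcal P_r)$.
   Context: $V_k:=(\mathbb 1,c,c^2,\dots,c^{k-1})\in\mathbb R^{s\times k}$ (componentwise powers of the node vector $c$), $\mathcal P_k:=\big(\binom{j-1}{i-1}\big)_{i,j=1}^k$, $\tilde E_k:=(i\,\delta_{i+1,j})_{i,j=1}^k$, and $\mathcal L_{q,r}(X):=\tilde E_q^{\mathsf T}X+X\tilde E_r$ for $X\in\mathbb R^{q\times r}$. A matrix $X=(x_{ij})\in\mathbb R^{q\times r}$ has Hankel form if there are numbers $\xi_k$ with $x_{ij}=\xi_{i+j-1}$ for all $1\le i\le q$, $1\le j\le r$. *)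

(* Defs.v *)
(* Matrices are indexed from 0 ('I_k); the paper's 1-based
   indices i,j correspond to i-1, j-1 here. *)
From mathcomp Require Import all_boot all_order all_algebra.
From mathcomp Require Import reals.
Set Implicit Arguments. Unset Strict Implicit. Unset Printing Implicit Defensive.
Import Order.TTheory GRing.Theory Num.Theory.
Local Open Scope ring_scope.

Definition Vmx {R : realType} (s k : nat) (c : 'cV[R]_s) : 'M[R]_(s, k) :=
  \matrix_(i < s, j < k) (c i 0) ^+ j.

Definition Pmx {R : realType} (k : nat) : 'M[R]_k :=
  \matrix_(i < k, j < k) ('C(j, i))%:R.

Definition Etmx {R : realType} (k : nat) : 'M[R]_k :=
  \matrix_(i < k, j < k) (if (j : nat) == i.+1 then (i.+1)%:R else 0).

Definition Lop {R : realType} (q r : nat) (X : 'M[R]_(q, r)) : 'M[R]_(q, r) :=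
  (Etmx q)^T *m X + X *m Etmx r.

(* Hankel form: x_ij = xi_{i+j-1} (1-based) i.e. x_ij = xi (i+j) (0-based) *)
Definition hankel {R : realType} (q r : nat) (X : 'M[R]_(q, r)) : Prop :=
  exists xi : nat -> R, forall (i : 'I_q) (j : 'I_r), X i j = xi (i + j)%N.

(* Main.v *)
Require Import Defs.
From mathcomp Require Import all_boot all_order all_algebra.
From mathcomp Require Import reals.
Import Order.TTheory GRing.Theory Num.Theory.
Local Open Scope ring_scope.


Section H.
Variable R : realType.

Lemma if_mul0 b (a c : R) : (if b then a else 0) * c = if b then a * c else 0.
Proof. by case: b; rewrite ?mul0r. Qed.
Lemma mul_if0 b (a c : R) : c * (if b then a else 0) = if b then c * a else 0.
Proof. by case: b; rewrite ?mulr0. Qed.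

Lemma sum_if k m (F : nat -> R) :
  \sum_(l < k) (if (l : nat) == m then F l else 0) = if (m < k)%N then F m else 0.
Proof.
elim: k => [|k IH]; first by rewrite big_ord0.
rewrite big_ord_recr /= IH.
case: (ltngtP m k) => H.
- by rewrite (ltn_trans H (ltnSn k)) addr0.
- by rewrite ltnNge H addr0.
- by rewrite H ltnSn add0r.
Qed.

Lemma sum_ifS k m (G : nat -> R) : (m < k)%N ->
  \sum_(l < k) (if m == (l : nat).+1 then G l else 0) = if m is m'.+1 then G m' else 0.
Proof.
case: m => [|m] Hm.
  by rewrite big1.
rewrite (_ : G m = if (m < k)%N then G m else 0); last by rewrite (ltnW Hm).
rewrite -(sum_if k m G).
apply: eq_bigr => l _.
by rewrite eqSS eq_sym.
Qed.

Definition Hs (xi : nat -> R) m := \sum_(n < m.+1) ('C(m, n))%:R * xi n.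

Lemma pascal m (f : nat -> R) :
  \sum_(n < m.+2) ('C(m.+1, n))%:R * f n =
  \sum_(n < m.+1) ('C(m, n))%:R * f n + \sum_(n < m.+1) ('C(m, n))%:R * f n.+1.
Proof.
have E1 : \sum_(n < m.+1) ('C(m, n))%:R * f n =
   f 0%N + \sum_(n < m.+1) ('C(m, n.+1))%:R * f n.+1.
  rewrite big_ord_recl bin0 mul1r; congr (_ + _).
  by rewrite [RHS]big_ord_recr /= bin_small // mul0r addr0.
rewrite E1 big_ord_recl bin0 mul1r -addrA; congr (_ + _).
under eq_bigr => n _ do rewrite /bump /= ?add1n binS natrD mulrDl.
by rewrite big_split.
Qed.

Lemma key (i j : nat) (xi : nat -> R) :
  \sum_(a < i.+1) ('C(i, a))%:R * \sum_(b < j.+1) ('C(j, b))%:R * xi (a + b)%N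
  = Hs xi (i + j).
Proof.
elim: i xi => [|i IH] xi.
  by rewrite big_ord1 bin0 mul1r.
rewrite (pascal i (fun a => \sum_(b < j.+1) ('C(j, b))%:R * xi (a + b)%N)) /= IH.
have -> : \sum_(a < i.+1) ('C(i, a))%:R * \sum_(b < j.+1) ('C(j, b))%:R * xi (a.+1 + b)%N
  = \sum_(a < i.+1) ('C(i, a))%:R * \sum_(b < j.+1) ('C(j, b))%:R * (fun n => xi n.+1) (a + b)%N.
  by apply: eq_bigr => a _; congr (_ * _); apply: eq_bigr => b _; rewrite addSn.
by rewrite (IH (fun n => xi n.+1)) /Hs addSn (pascal (i + j) xi).
Qed.

End H.
Lemma partA (R : realType) (s q r : nat) (c : 'cV[R]_s) (K : 'M[R]_s) :
  is_diag_mx K -> hankel ((Vmx q c)^T *m K *m Vmx r c).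
Proof.
move=> /is_diag_mxP HK.
exists (fun n => \sum_(k < s) K k k * c k 0 ^+ n) => i j.
rewrite mxE; apply: eq_bigr => k _.
rewrite mxE (bigD1 k) //= big1 ?addr0; last first.
  by move=> l Hl; rewrite HK ?mulr0.
by rewrite !mxE exprD mulrA [_ ^+ i * _]mulrC.
Qed.
Lemma EP (R : realType) k : Etmx k *m Pmx k = Pmx k *m Etmx k :> 'M[R]_k.
Proof.
apply/matrixP => i j; rewrite !mxE.
under eq_bigr => l _ do rewrite !mxE if_mul0.
under [RHS]eq_bigr => l _ do rewrite !mxE mul_if0.
rewrite (sum_if _ k i.+1 (fun l => (i.+1)%:R * ('C(j, l))%:R)).
rewrite (sum_ifS _ _ _ (fun l => ('C(l, i))%:R * (l.+1)%:R) (ltn_ord j)).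
case: j => [[|j] Hj] /=.
  by case: ifP => // _; rewrite bin0n mulr0.
have E := mul_bin_diag j.+1 i; rewrite /= in E.
rewrite -!natrM mulnC [X in _ = X%:R]mulnC E.
case: ifP => Hik; first by rewrite mulnC.
rewrite bin_small ?muln0 //.
by apply: leq_trans Hj _; rewrite leqNgt Hik.
Qed.
Lemma partC (R : realType) (q r : nat) (X : 'M[R]_(q, r)) :
        (Pmx q)^T *m Lop X = Lop ((Pmx q)^T *m X)
        /\ Lop X *m Pmx r = Lop (X *m Pmx r).
Proof.
split; rewrite /Lop.
  by rewrite mulmxDr !mulmxA -trmx_mul EP trmx_mul.
by rewrite mulmxDl -!mulmxA EP.
Qed.

Lemma partL (R : realType) (q r : nat) (X : 'M[R]_(q, r)) :
  hankel X -> hankel (Lop X).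
Proof.
case=> xi HX.
exists (fun n => n%:R * xi n.-1) => i j.
rewrite /Lop !mxE.
under eq_bigr => l _ do rewrite !mxE HX if_mul0.
under [X in _ + X = _]eq_bigr => l _ do rewrite !mxE HX mul_if0.
rewrite (sum_ifS _ _ _ (fun l => l.+1%:R * xi (l + j)%N) (ltn_ord i)).
rewrite (sum_ifS _ _ _ (fun l => xi (i + l)%N * l.+1%:R) (ltn_ord j)).
case: i => [[|i] Hi]; case: j => [[|j] Hj] /=.
- by rewrite mul0r addr0.
- by rewrite add0r add0n mulrC.
- by rewrite addr0 !addn0.
- by rewrite [(i.+1 + j)%N]addSn -addnS [_ * j.+1%:R]mulrC -mulrDl -natrD.
Qed.
Lemma trunc (R : realType) k m (F : nat -> R) : (m < k)%N ->
  \sum_(a < k) ('C(m, a))%:R * F a = \sum_(a < m.+1) ('C(m, a))%:R * F a.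
Proof.
move=> Hm.
rewrite -(big_mkord xpredT (fun a => ('C(m, a))%:R * F a)).
rewrite -(big_mkord xpredT (fun a => ('C(m, a))%:R * F a)).
rewrite (big_cat_nat _ (n := m.+1)) //= [X in _ + X]big1_seq ?addr0 // => a.
by case/andP => _; rewrite mem_index_iota => /andP [Ha _]; by rewrite bin_small // mul0r.
Qed.

Lemma partP (R : realType) (q r : nat) (X : 'M[R]_(q, r)) :
  hankel X -> hankel ((Pmx q)^T *m X *m Pmx r).
Proof.
case=> xi HX.
exists (Hs _ xi) => i j.
rewrite -key mxE.
transitivity (\sum_(b < r) ('C(j, b))%:R * \sum_(a < q) ('C(i, a))%:R * xi (a + b)%N).
  apply: eq_bigr => b _; rewrite !mxE mulrC; congr (_ * _).
  by apply: eq_bigr => a _; rewrite !mxE HX.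
rewrite (trunc _ _ _ (fun b => \sum_(a < q) ('C(i, a))%:R * xi (a + b)%N) (ltn_ord j)).
under eq_bigr => b _ do rewrite (trunc _ _ _ (fun a => xi (a + b)%N) (ltn_ord i)) mulr_sumr.
rewrite exchange_big /=; apply: eq_bigr => a _.
rewrite mulr_sumr; apply: eq_bigr => b _.
by rewrite mulrCA.
Qed.

Theorem lemma4p3 (R : realType) (s q r : nat) (c : 'cV[R]_s) :
  (forall K : 'M[R]_s, is_diag_mx K ->
     hankel ((Vmx q c)^T *m K *m Vmx r c))
  /\ (forall X : 'M[R]_(q, r), hankel X ->
        hankel ((Pmx q)^T *m X *m Pmx r) /\ hankel (Lop X))
  /\ (forall X : 'M[R]_(q, r),
        (Pmx q)^T *m Lop X = Lop ((Pmx q)^T *m X)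
        /\ Lop X *m Pmx r = Lop (X *m Pmx r)).
Proof.
split; first exact: partA.
split; last exact: partC.
by move=> X HX; split; [exact: partP | exact: partL].
Qed.
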